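(* Let $(\Omega,\mathcal F,\mathbb P)$, $\mathnormal K$, $(\Omega_I,\mathcal F_I,\mathbb P_I)$, $\hat\Omega_I$, $\hat{\mathbb P}_I$ be as in the context, let $\{R_I: I\in\mathnormal K\}$ be events $R_I\in\mathcal F_I$ with $\mathbb P_I(R_I)>0$ for all $I$, and let $W$ be a random element of $\mathnormal K$. For $A\in\mathcal F$ define $A(I):=A\cap[W=I]$, $$\Phi_I(A):=\{\omega_1\in\hat\Omega_I:\ \mathbb P_I(A_{I,\omega_1})>0\}\times R_I,\qquad \Phi(A):=\bigcup_{I\in\mathnormal K}\Phi_I(A(I)),$$ $$\tilde\Phi(A):=\bigcup_{I\in\mathnormal K}\big[\{\omega_1\in\hat\Omega_I:\ A(I)_{I,\omega_1}\ne\emptyset\}\times R_I\big].$$ Then for each $A\in\mathcal F$, $\Phi(A)\in\mathcal F$ and $\Phi(A)\subseteq\tilde\Phi(A)$. Furthermore, if $\mathbb P(A)>0$ then $\mathbb P(\Phi(A))>0$.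
   Context: Construction of the probability space: let $\mathbf u_1,\mathbf u_2,\dots$ be an enumeration of $\mathbb Z^2$ and $\mathbf B_k:=\mathbf u_k+[-1/2,1/2]^2$. Let $N_k$ ($k\ge1$) be i.i.d. Poisson random variables of mean $1$; $U_{k,l}$ ($l\ge1$) independent random points with $U_{k,l}$ uniform in $\mathbf B_k$; and $\tau^{m,n}_{k,l}$ (for $l\ge1$, $m\ge k$, $n\ge1$, with $n>l$ when $m=k$) i.i.d. nonnegative random variables with distribution $\mathbb F$; all these collections are independent. The Poisson process consists of the points $U_{k,1},\dots,U_{k,N_k}$, $k\ge1$, and the edge $(U_{k,l},U_{m,n})$ of the Delaunay triangulation (with $m>k$, or $m=k$ and $n>l$) receives passage time $\tau^{m,n}_{k,l}$. $(\Omega,\mathcal F,\mathbb P)$ is the product over $k$ of the probability spaces $(\Omega^k,\mathcal F^k,\mathbb P^k)$ induced by $N_k$, $(U_{k,l})_l$ and $(\tau^{m,n}_{k,l})$. $\mathnormal K$ is the collection of finite sequences $I=((k_j,l_j,m_j,n_j))_{j=1,\dots,q}\in(\mathbb N^4)^q$, $q\ge1$, with pairwise distinct entries, $k_1\le\dots\le k_q$, and for each $j$ either $k_j<m_j$ or $l_j<n_j$. For $I\in\mathnormal K$, $(\Omega_I,\mathcal F_I,\mathbb P_I)$ is the probability space induced by the random vector $(\tau^{m_j,n_j}_{k_j,l_j})_{j=1,\dots,q}$ (so $\Omega_I=\mathbb R^q$), and each $\omega\in\Omega$ is written $\omega=(\omega_1,\omega_2)$ with $\omega_2\in\Omega_I$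 its $I$-coordinates and $\omega_1$ the remaining coordinates; $\hat\Omega_I:=\{\omega_1:\ \exists\,\omega_2\in\Omega_I,\ (\omega_1,\omega_2)\in\Omega\}$ with $\hat{\mathbb P}_I$ the law of $\mathbb P$ restricted to these coordinates. For $A\subseteq\Omega$ and $\omega_1\in\hat\Omega_I$, $A_{I,\omega_1}:=\{\omega_2\in\Omega_I:\ (\omega_1,\omega_2)\in A\}$. *)

(* Defs.v *)
From HB Require Import structures.
From mathcomp Require Import all_boot all_order all_algebra all_classical all_reals all_analysis.



Unset Printing Implicit Defensive.
Import Order.TTheory GRing.Theory Num.Theory.
Local Open Scope classical_set_scope.
Local Open Scope ring_scope.

(* Indices of passage times: (k,l,m,n) stands for tau^{m,n}_{k,l}.
   All indices are 0-based (the paper's are 1-based). *)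
Definition quad := (nat * nat * nat * nat)%type.
Definition qk (e : quad) : nat := e.1.1.1.
Definition ql (e : quad) : nat := e.1.1.2.
Definition qm (e : quad) : nat := e.1.2.
Definition qn (e : quad) : nat := e.2.

Definition tvalid (e : quad) : bool :=
  (qk e < qm e)%N || ((qk e == qm e) && (ql e < qn e)%N).
Definition tidx := {e : quad | tvalid e}.
Definition t0 : tidx := exist _ (0, 0, 1, 0)%N erefl.

(* A sample point: the coordinates N_k, U_{k,l} (points of R^2) and the
   passage times tau^{m,n}_{k,l}. *)
Record omega (R : realType) := Omega {
  oN : nat -> nat;
  oU : nat -> nat -> (R * R)%type;
  oT : tidx -> R }.
Arguments Omega {R}.
Arguments oN {R}.
Arguments oU {R}.
Arguments oT {R}.

HB.instance Definition _ (R : realType) := gen_eqMixin (omega R).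
HB.instance Definition _ (R : realType) := gen_choiceMixin (omega R).
HB.instance Definition _ (R : realType) := isPointed.Build (omega R)
  (@Omega R (fun _ => 0%N) (fun _ _ => (0, 0)) (fun _ => 0)).

Definition gen_sets (R : realType) : set (set (omega R)) :=
  [set A | (exists k (B : set nat), measurable B /\ A = (fun w => oN w k) @^-1` B)
        \/ (exists k l (B : set (R * R)%type), measurable B /\
               A = (fun w => oU w k l) @^-1` B)
        \/ (exists t (B : set R), measurable B /\ A = (fun w => oT w t) @^-1` B)].

Definition Omg (R : realType) := g_sigma_algebraType (gen_sets R).

Definition box (R : realType) (u : nat -> (int * int)%type) (k : nat) : set (R * R)%type :=
  [set p | `|p.1 - (u k).1%:~R| <= 2^-1 /\ `|p.2 - (u k).2%:~R| <= 2^-1].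
Arguments box {R}.

(* uniform law on B_k (which has area 1) *)
Definition unif_box (R : realType) (u : nat -> (int * int)%type) (k : nat)
  (B : set (R * R)%type) : \bar R :=
  ((@lebesgue_measure R \x @lebesgue_measure R) (B `&` box u k))%E.
Arguments unif_box {R}.

(* P is the product probability of the laws: N_k ~ Poisson(1), U_{k,l} uniform
   in B_k, tau ~ F, all independent (characterized by its values on all
   finite-dimensional cylinder sets, which determine it uniquely). *)
Definition model_law (R : realType) (u : nat -> (int * int)%type)
  (F : probability R R) (P : probability (Omg R) R) : Prop :=
  forall (SN : seq nat) (SU : seq (nat * nat)%type) (ST : seq tidx)
         (BN : nat -> set nat) (BU : (nat * nat)%type -> set (R * R)%type)
         (BT : tidx -> set R),
    uniq SN -> uniq SU -> uniq ST ->
    (forall k, measurable (BN k)) -> (forall kl, measurable (BU kl)) ->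
    (forall t, measurable (BT t)) ->
    P [set w : Omg R | (forall k, k \in SN -> BN k (oN w k)) /\
                       (forall kl, kl \in SU -> BU kl (oU w kl.1 kl.2)) /\
                       (forall t, t \in ST -> BT t (oT w t))]
    = ((\prod_(k <- SN) poisson_prob (1 : R) 0 (BN k)) *
       (\prod_(kl <- SU) unif_box u kl.1 (BU kl)) *
       (\prod_(t <- ST) F (BT t)))%E.
Arguments model_law {R}.

Definition Kset : set (seq quad) :=
  [set I | (0 < size I)%N /\ uniq I /\ sorted leq [seq qk e | e <- I] /\
           all tvalid I].

Definition tau (R : realType) (w : omega R) (e : quad) : R := oT w (insubd t0 e).
Arguments tau {R}.

(* omega_2 : the I-coordinates of w, a point of Omega_I = R^q *)
Definition XI (R : realType) (I : seq quad) (w : omega R) : (size I).-tuple R :=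
  map_tuple (tau w) (in_tuple I).
Arguments XI {R}.

Definition PI (R : realType) (P : probability (Omg R) R) (I : seq quad)
  (B : set ((size I).-tuple R)) : \bar R :=
  P (XI I @^-1` B).
Arguments PI {R}.

(* (omega_1, x) : replace the I-coordinates of w by x *)
Definition set_tau (R : realType) (w : omega R) (I : seq quad) (x : seq R) : omega R :=
  @Omega R (oN w) (oU w)
    (fun t => if val t \in I then nth 0 x (index (val t) I) else oT w t).
Arguments set_tau {R}.

(* the section A_{I,omega_1} (depends only on the non-I coordinates of w) *)
Definition sec (R : realType) (A : set (omega R)) (I : seq quad) (w : omega R)
  : set ((size I).-tuple R) :=
  [set x | A (set_tau w I x)].
Arguments sec {R}.

Definition evW (R : realType) (W : Omg R -> seq quad) (I : seq quad) : set (Omg R) :=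
  [set w | W w = I].
Arguments evW {R}.

Definition PhiI (R : realType) (P : probability (Omg R) R)
  (RI : forall I : seq quad, set ((size I).-tuple R)) (I : seq quad)
  (B : set (Omg R)) : set (Omg R) :=
  [set w | (0 < PI P I (sec B I w))%E /\ RI I (XI I w)].
Arguments PhiI {R}.

Definition Phi (R : realType) (P : probability (Omg R) R)
  (RI : forall I : seq quad, set ((size I).-tuple R))
  (W : Omg R -> seq quad) (A : set (Omg R)) : set (Omg R) :=
  \bigcup_(I in Kset) PhiI P RI I (A `&` evW W I).
Arguments Phi {R}.

Definition PhiT (R : realType)
  (RI : forall I : seq quad, set ((size I).-tuple R))
  (W : Omg R -> seq quad) (A : set (Omg R)) : set (Omg R) :=
  \bigcup_(I in Kset) [set w | sec (A `&` evW W I) I w !=set0 /\ RI I (XI I w)].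
Arguments PhiT {R}.

(* Main.v *)
Require Import Defs.
From HB Require Import structures.
From mathcomp Require Import all_boot all_order all_algebra all_classical all_reals all_analysis.
From mathcomp Require Import measurable_realfun.
Import Order.TTheory GRing.Theory Num.Theory.
Local Open Scope classical_set_scope.
Local Open Scope ereal_scope.

Section S.
Variable R : realType.

Lemma mN k : measurable_fun setT (fun w : Omg R => oN w k).
Proof. move=> _ B mB; rewrite setTI; apply: sub_sigma_algebra; left; by exists k, B. Qed.
Lemma mU k l : measurable_fun setT (fun w : Omg R => oU w k l).
Proof. move=> _ B mB; rewrite setTI; apply: sub_sigma_algebra; right; left; by exists k, l, B. Qed.
Lemma mT t : measurable_fun setT (fun w : Omg R => oT w t).
Proof. move=> _ B mB; rewrite setTI; apply: sub_sigma_algebra; right; right; by exists t, B. Qed.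

Lemma meas_to_Omg d (T : measurableType d) (f : T -> Omg R) :
  (forall k, measurable_fun setT (fun x => oN (f x) k)) ->
  (forall k l, measurable_fun setT (fun x => oU (f x) k l)) ->
  (forall t, measurable_fun setT (fun x => oT (f x) t)) ->
  measurable_fun setT f.
Proof.
move=> hN hU hT; apply: (@measurability _ _ _ _ _ f (gen_sets R)) => //.
move=> _ [C [[k [B [mB ->]]]|[[k [l [B [mB ->]]]]|[t [B [mB ->]]]]] <-].
- exact: hN.
- exact: hU.
- exact: hT.
Qed.

Lemma meas_nth n (j : nat) : measurable_fun setT (fun x : n.-tuple R => nth 0%R x j).
Proof.
case: (ltnP j n) => hj.
  have -> : (fun x : n.-tuple R => nth 0%R x j) = (fun x => tnth x (Ordinal hj)).
    by apply: funext => x; rewrite (tnth_nth 0%R).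
  exact: measurable_tnth.
have -> : (fun x : n.-tuple R => nth 0%R x j) = (fun=> 0%R).
  by apply: funext => x; rewrite nth_default // size_tuple.
exact: measurable_cst.
Qed.

Lemma meas_allin d (T : measurableType d) (X : eqType) (S : seq X) (f : X -> set T) :
  (forall x, measurable (f x)) -> measurable [set y | forall x, x \in S -> f x y].
Proof.
move=> hf; elim: S => [|x S IH].
  have -> : [set y : T | forall x, x \in [::] -> f x y] = setT.
    by apply: funext => y; apply: propext; split => // _ x.
  exact: measurableT.
have -> : [set y : T | forall z, z \in x :: S -> f z y] =
    f x `&` [set y | forall x, x \in S -> f x y].
  apply: funext => y; apply: propext; split.
    by move=> h; split; [apply: h; rewrite mem_head|move=> z zS; apply: h; rewrite in_cons zS orbT].
  by move=> [h1 h2] z; rewrite in_cons => /orP[/eqP->//|/h2].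
exact: measurableI.
Qed.


Lemma tau_val (w : omega R) (t : tidx) : tau w (val t) = oT w t.
Proof. by rewrite /tau valKd. Qed.

Lemma mXI (I : seq quad) : measurable_fun setT (XI I : Omg R -> _).
Proof.
apply/measurable_fun_tnthP => i.
have -> : ((fun x => @tnth (size I) R x i) \o XI I) = (fun w : Omg R => oT w (insubd t0 (tnth (in_tuple I) i))).
  by apply: funext => w /=; rewrite /XI tnth_map.
exact: mT.
Qed.

Definition Psi (I : seq quad) (p : Omg R * (size I).-tuple R) : Omg R := set_tau p.1 I p.2.

Lemma mPsi I : measurable_fun setT (Psi I).
Proof.
apply: meas_to_Omg.
- move=> k; exact: (measurableT_comp (mN k) measurable_fst).
- move=> k l; exact: (measurableT_comp (mU k l) measurable_fst).
- move=> t; rewrite /Psi /set_tau /=.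
  case: (val t \in I).
    exact: (measurableT_comp (meas_nth _ _) measurable_snd).
  exact: (measurableT_comp (mT t) measurable_fst).
Qed.


Definition cyl (SN : seq nat) (SU : seq (nat * nat)) (ST : seq tidx)
  (BN : nat -> set nat) (BU : (nat * nat)%type -> set (R * R)%type) (BT : tidx -> set R) : set (Omg R) :=
  [set w : Omg R | (forall k, k \in SN -> BN k (oN w k)) /\
                       (forall kl, kl \in SU -> BU kl (oU w kl.1 kl.2)) /\
                       (forall t, t \in ST -> BT t (oT w t))].

Definition Gcyl : set (set (Omg R)) := [set C | exists SN SU ST BN BU BT,
  [/\ uniq SN, uniq SU, uniq ST, 
      [/\ (forall k, measurable (BN k)), (forall kl, measurable (BU kl)) & (forall t, measurable (BT t))]
    & C = cyl SN SU ST BN BU BT]].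

Lemma cyl_meas SN SU ST BN BU BT :
  (forall k, measurable (BN k)) -> (forall kl, measurable (BU kl)) -> (forall t, measurable (BT t)) ->
  measurable (cyl SN SU ST BN BU BT).
Proof.
move=> hN hU hT.
have h1 := @meas_allin _ (Omg R) _ SN (fun k w => BN k (oN w k)).
have h2 := @meas_allin _ (Omg R) _ SU (fun kl w => BU kl (oU w kl.1 kl.2)).
have h3 := @meas_allin _ (Omg R) _ ST (fun t w => BT t (oT w t)).
apply: measurableI; [|apply: measurableI].
- apply: h1 => k; by rewrite -[X in measurable X]setTI; apply: mN.
- apply: h2 => k; by rewrite -[X in measurable X]setTI; apply: mU.
- apply: h3 => k; by rewrite -[X in measurable X]setTI; apply: mT.
Qed.

Lemma meas_cond d (T : measurableType d) (b : bool) (S : set T) :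
  measurable S -> measurable [set v | b -> S v].
Proof.
case: b => mS.
  by have -> : [set v | true -> S v] = S by apply: funext => v; apply: propext; split => [h|h _]; [apply: h|].
have -> : [set v : T | false -> S v] = setT by apply: funext => v; apply: propext; split.
exact: measurableT.
Qed.

Lemma allinI (X : eqType) (Y : Type) (S1 S2 : seq X) (f1 f2 : X -> Y -> Prop) y :
  ((forall x, x \in S1 -> f1 x y) /\ (forall x, x \in S2 -> f2 x y)) <->
  (forall x, x \in undup (S1 ++ S2) -> (x \in S1 -> f1 x y) /\ (x \in S2 -> f2 x y)).
Proof.
split.
  by move=> [h1 h2] x _; split; [apply: h1|apply: h2].
move=> h; split => x xS.
  by have [+ _] := h x ltac:(by rewrite mem_undup mem_cat xS); apply.
by have [_ +] := h x ltac:(by rewrite mem_undup mem_cat xS orbT); apply.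
Qed.

Lemma Gcyl_setI : setI_closed Gcyl.
Proof.
move=> A B [SN1 [SU1 [ST1 [BN1 [BU1 [BT1 [u1 u2 u3 [m1 m2 m3] ->]]]]]]]
  [SN2 [SU2 [ST2 [BN2 [BU2 [BT2 [v1 v2 v3 [n1 n2 n3] ->]]]]]]].
exists (undup (SN1 ++ SN2)), (undup (SU1 ++ SU2)), (undup (ST1 ++ ST2)),
  (fun k => [set v | (k \in SN1 -> BN1 k v) /\ (k \in SN2 -> BN2 k v)]),
  (fun k => [set v | (k \in SU1 -> BU1 k v) /\ (k \in SU2 -> BU2 k v)]),
  (fun k => [set v | (k \in ST1 -> BT1 k v) /\ (k \in ST2 -> BT2 k v)]).
split; rewrite ?undup_uniq //.
  split => k; (apply: measurableI; apply: meas_cond => //).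
apply: funext => w; apply: propext; rewrite /cyl /=; split.
  move=> [[a1 [a2 a3]] [b1 [b2 b3]]].
  split; [|split] => k _; (split => h; [by first [apply: a1|apply: a2|apply: a3]|by first [apply: b1|apply: b2|apply: b3]]).
have M1 (X : eqType) (S1 S2 : seq X) x : x \in S1 -> x \in undup (S1 ++ S2).
  by move=> h; rewrite mem_undup mem_cat h.
have M2 (X : eqType) (S1 S2 : seq X) x : x \in S2 -> x \in undup (S1 ++ S2).
  by move=> h; rewrite mem_undup mem_cat h orbT.
move=> [a1 [a2 a3]].
split; split; [|split| |split] => k kS.
- by have [+ _] := a1 k (M1 _ _ _ _ kS); apply.
- by have [+ _] := a2 k (M1 _ _ _ _ kS); apply.
- by have [+ _] := a3 k (M1 _ _ _ _ kS); apply.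
- by have [_ +] := a1 k (M2 _ _ _ _ kS); apply.
- by have [_ +] := a2 k (M2 _ _ _ _ kS); apply.
- by have [_ +] := a3 k (M2 _ _ _ _ kS); apply.
Qed.


Lemma gen_Gcyl : gen_sets R `<=` Gcyl.
Proof.
have mT' : forall (T : measurableType default_measure_display) , measurable (@setT T) by move=> T; exact: measurableT.
move=> _ [[k [B [mB ->]]]|[[k [l [B [mB ->]]]]|[t [B [mB ->]]]]].
- exists [:: k], [::], [::], (fun=> B), (fun=> setT), (fun=> setT); split => //.
  apply: funext => w; apply: propext; rewrite /cyl /=; split.
    by move=> h; split => // k'; rewrite mem_seq1 => /eqP ->.
  by move=> [h _]; apply: h; rewrite mem_seq1.
- exists [::], [:: (k, l)], [::], (fun=> setT), (fun=> B), (fun=> setT); split => //.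
  apply: funext => w; apply: propext; rewrite /cyl /=; split.
    by move=> h; split => //; split => // k'; rewrite mem_seq1 => /eqP ->.
  by move=> [_ [h _]]; apply: (h (k, l)); rewrite mem_seq1.
- exists [::], [::], [:: t], (fun=> setT), (fun=> setT), (fun=> B); split => //.
  apply: funext => w; apply: propext; rewrite /cyl /=; split.
    by move=> h; split => //; split => // k'; rewrite mem_seq1 => /eqP ->.
  by move=> [_ [_ h]]; apply: h; rewrite mem_seq1.
Qed.

Lemma Omg_Gcyl : @measurable _ (Omg R) = <<s Gcyl>>.
Proof.
apply/seteqP; split.
  exact: sub_sigma_algebra2 gen_Gcyl.
apply: smallest_sub; first exact: sigma_algebra_measurable.
by move=> _ [SN [SU [ST [BN [BU [BT [_ _ _ [h1 h2 h3] ->]]]]]]]; apply: cyl_meas.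
Qed.

End S.
Section M.
Variable R : realType.
Variable P : probability (Omg R) R.
Variable I : seq quad.

HB.instance Definition _ := isMeasurableFun.Build _ _ (Omg R) _ (XI I : Omg R -> _) (@mXI R I).

Definition mu := distribution P (XI I : Omg R -> _).

Lemma muE B : mu B = PI P I B. Proof. by []. Qed.

Definition PM := (P \x mu)%E.

Definition Q (A : set (Omg R)) : \bar R := PM (Psi R I @^-1` A).

Let Q0 : Q set0 = 0.
Proof. rewrite /Q preimage_set0. exact: (measure0 PM). Qed.

Let Q_ge0 A : 0 <= Q A.
Proof. exact: measure_ge0. Qed.

Let Q_sigma_additive : semi_sigma_additive Q.
Proof.
move=> F mF tF mUF; rewrite /Q preimage_bigcup.
apply: measure_semi_sigma_additive.
- by move=> n; rewrite -[X in measurable X]setTI; exact: (@mPsi R I).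
- apply/trivIsetP => /= i j _ _ ij; rewrite -preimage_setI.
  by move/trivIsetP : tF => /(_ _ _ _ _ ij) ->//; rewrite preimage_set0.
- by rewrite -preimage_bigcup -[X in measurable X]setTI; exact: (@mPsi R I).
Qed.

HB.instance Definition _ := isMeasure.Build _ _ _ Q Q0 Q_ge0 Q_sigma_additive.


Lemma nth_XI (w : omega R) (t : tidx) : val t \in I ->
  nth 0%R (XI I w) (index (val t) I) = oT w t.
Proof.
move=> tI; rewrite /XI /= (nth_map (val t)) ?index_mem // nth_index //.
exact: tau_val R w t.
Qed.

Lemma Q_cyl u F : model_law u F P -> forall C, Gcyl R C -> Q C = P C.
Proof.
move=> HP _ [SN [SU [ST [BN [BU [BT [u1 u2 u3 [m1 m2 m3] ->]]]]]]].
set ST1 := [seq t <- ST | val t \notin I].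
set ST2 := [seq t <- ST | val t \in I].
set C1 := cyl R SN SU ST1 BN BU BT.
set C2 := [set x : (size I).-tuple R | forall t, t \in ST2 -> BT t (nth 0%R x (index (val t) I))].
have E : Psi R I @^-1` cyl R SN SU ST BN BU BT = C1 `*` C2.
  apply: funext => [[w x]]; apply: propext; rewrite /C1 /C2 /cyl /Psi /set_tau /=; split.
    move=> [h1 [h2 h3]]; split; first split => //; first split => //.
      move=> t; rewrite mem_filter => /andP[tI tS]; move: (h3 t tS).
      by rewrite (negbTE tI).
    move=> t; rewrite mem_filter => /andP[tI tS]; move: (h3 t tS).
    by rewrite tI.
  move=> [[h1 [h2 h3]] h4]; split => //; split => // t tS.
  case: ifP => tI.
    by apply: h4; rewrite mem_filter tI.
  by apply: h3; rewrite mem_filter tI.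
have mC2 : measurable C2.
  have := @meas_allin _ ((size I).-tuple R) _ ST2 (fun t x => BT t (nth 0%R x (index (val t) I))).
  apply => t.
  by rewrite -[X in measurable X]setTI; apply: (meas_nth R).
have mC1 : measurable C1 by apply: (cyl_meas R).
rewrite /Q E /PM product_measure1E //.
transitivity (P C1 * P (cyl R [::] [::] ST2 BN BU BT)).
  congr (_ * _).
  rewrite /= /distribution /pushforward; congr (P _); apply: funext => w; apply: propext.
  rewrite /C2 /cyl /=; split.
    move=> h; split => //; split => // t tS; rewrite -nth_XI; first exact: h.
    by move: tS; rewrite mem_filter => /andP[].
  move=> [_ [_ h]] t tS; rewrite nth_XI; first exact: h.
  by move: tS; rewrite mem_filter => /andP[].
rewrite /C1 /cyl !HP ?filter_uniq // !big_nil !mul1e.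
rewrite -muleA; congr (_ * _).
rewrite /ST1 /ST2 !big_filter.
by rewrite [in RHS](bigID (fun t : tidx => val t \in I)) /= muleC.
Qed.


Lemma Gcyl_setT : Gcyl R setT.
Proof.
exists [::], [::], [::], (fun=> setT), (fun=> setT), (fun=> setT); split => //.
by apply: funext => w; apply: propext; rewrite /cyl /=; split.
Qed.

Lemma PQ u F : model_law u F P -> forall A, measurable A -> P A = PM (Psi R I @^-1` A).
Proof.
move=> HP A mA.
have := @measure_unique _ R (Omg R) (Gcyl R) (fun=> setT) (Omg_Gcyl R) (Gcyl_setI R)
  (fun=> Gcyl_setT) (bigcup_const setT (ex_intro _ 0%N Logic.I : [set: nat] !=set0)) P (Q) _ _ A mA.
apply.
- by move=> C GC; exact: esym (@Q_cyl u F HP C GC).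
- move=> _ /=; rewrite (probability_setT P); exact: ltry.
Qed.


Lemma set_tau_idem (w : omega R) (x y : seq R) : set_tau (set_tau w I x) I y = set_tau w I y.
Proof. rewrite /set_tau /=; congr Omega; apply: funext => t /=; by case: (val t \in I). Qed.

Lemma sec_set_tau (B : set (Omg R)) (w : omega R) (x : seq R) : sec B I (set_tau w I x) = sec B I w.
Proof. rewrite /sec; apply: funext => y /=; by rewrite set_tau_idem. Qed.

Lemma sec_xsection (B : set (Omg R)) (w : Omg R) : sec B I w = xsection (Psi R I @^-1` B) w.
Proof. by apply: funext => y; apply: propext; rewrite /xsection /sec /Psi /= in_setE. Qed.

Lemma XI_set_tau (w : omega R) (x : (size I).-tuple R) :
  uniq I -> all tvalid I -> XI I (set_tau w I x) = x.
Proof.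
move=> uI vI; apply: val_inj => /=.
apply: (@eq_from_nth _ 0%R); first by rewrite size_map size_tuple.
move=> i; rewrite size_map => hi.
rewrite (nth_map (head (0,0,0,0)%N I)) // /tau /set_tau /= val_insubd.
have hv : tvalid (nth (head (0, 0, 0, 0)%N I) I i) by apply: (allP vI); rewrite mem_nth.
by rewrite hv mem_nth // index_uniq.
Qed.

Lemma meas_g (B : set (Omg R)) : measurable B ->
  measurable_fun setT (fun w : Omg R => PI P I (sec B I w)).
Proof.
move=> mB.
have -> : (fun w : Omg R => PI P I (sec B I w)) = (mu \o xsection (Psi R I @^-1` B)).
  by apply: funext => w /=; rewrite sec_xsection.
apply: measurable_fun_xsection.
by rewrite -[X in measurable X]setTI; apply: (@mPsi R I).
Qed.

Lemma meas_G (B : set (Omg R)) : measurable B ->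
  measurable [set w : Omg R | 0 < PI P I (sec B I w)].
Proof.
move=> mB; rewrite -[X in measurable X]setTI.
exact: (emeasurable_fun_o_infty measurableT (meas_g B mB) 0).
Qed.

Lemma meas_PhiI RI (B : set (Omg R)) : measurable B -> measurable (RI I) ->
  measurable (PhiI P RI I B).
Proof.
move=> mB mR; apply: measurableI; first exact: meas_G.
by rewrite -[X in measurable X]setTI; apply: (@mXI R I).
Qed.


Lemma pos_PhiI u F RI B : model_law u F P -> uniq I -> all tvalid I ->
  measurable B -> measurable (RI I) -> 0 < PI P I (RI I) -> 0 < P B ->
  0 < P (PhiI P RI I B).
Proof.
move=> HP uI vI mB mR hR hB.
have mG := meas_G B mB.
set G := [set w : Omg R | 0 < PI P I (sec B I w)] in mG *.
have mPB : measurable (Psi R I @^-1` B).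
  by rewrite -[X in measurable X]setTI; apply: (@mPsi R I).
have E : Psi R I @^-1` PhiI P RI I B = G `*` RI I.
  apply: funext => [[w x]]; apply: propext.
  by rewrite /PhiI /Psi /G /= sec_set_tau XI_set_tau.
rewrite (@PQ u F HP _ (meas_PhiI RI B mB mR)) E /PM product_measure1E //.
apply: mule_gt0; last exact: hR.
apply: (lt_le_trans hB).
rewrite (@PQ u F HP _ mB) /PM /product_measure1.
apply: (@le_trans _ _ (\int[P]_x (\1_G x)%:E)).
  apply: (ge0_le_integral P measurableT).
  - by move=> w _; apply: measure_ge0.
  - exact: measurable_fun_xsection.
  - by apply/measurable_EFinP; apply: measurable_indic.
  move=> w _; rewrite indicE /=; case: (boolP (w \in G)) => wG.
    rewrite -sec_xsection; apply: probability_le1.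
    by rewrite sec_xsection; apply: measurable_xsection.
  move: wG; rewrite notin_setE /G /= => wG.
  rewrite -sec_xsection; rewrite leNgt; apply/negP => h; apply: wG.
  exact: h.
by rewrite integral_indic // setIT.
Qed.

End M.

Theorem lemma1 (R : realType) (u : nat -> (int * int)%type) (F : probability R R)
  (P : probability (Omg R) R) (RI : forall I : seq quad, set ((size I).-tuple R))
  (W : Omg R -> seq quad) :
  bijective u ->
  F `]-oo, 0%R[%classic = 0 ->
  model_law u F P ->
  (forall I, Kset I -> measurable (RI I) /\ 0 < PI P I (RI I)) ->
  (forall w, Kset (W w)) ->
  (forall I, measurable (evW W I)) ->
  forall A : set (Omg R), measurable A ->
    measurable (Phi P RI W A) /\ Phi P RI W A `<=` PhiT RI W A /\
    (0 < P A -> 0 < P (Phi P RI W A)).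
Proof.
move=> _ _ HP hRI hW hE A mA.
have KsetE I : Kset I -> uniq I /\ all tvalid I.
  by move=> [_ [uI [_ vI]]].
have mPhi : measurable (Phi P RI W A).
  rewrite /Phi bigcup_mkcond; apply: countable_bigcupT_measurable.
    exact: countableP.
  move=> I; case: ifPn => [/set_mem KI|_]; last exact: measurable0.
  apply: meas_PhiI; first exact: measurableI.
  exact: (hRI I KI).1.
split => //; split.
  move=> w [I KI [hpos hR]]; exists I => //; split => //.
  apply/set0P; apply/eqP => h; move: hpos; rewrite h /PI preimage_set0 measure0.
  by rewrite ltxx.
move=> hA.
have [I KI hI] : exists2 I, Kset I & 0 < P (A `&` evW W I).
  case: (pselect (exists2 I, Kset I & 0 < P (A `&` evW W I))) => // hno.
  exfalso.
  have h0 : forall I, P (A `&` evW W I) = 0.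
    move=> I; case: (pselect (Kset I)) => KI.
      apply/eqP; rewrite eq_le measure_ge0 andbT leNgt; apply/negP => h.
      by apply: hno; exists I.
    have -> : A `&` evW W I = set0.
      by apply/seteqP; split => // w [_ hw]; apply: KI; rewrite -hw.
    exact: measure0.
  pose Fn (n : nat) := match @unpickle (seq quad) n with Some J => A `&` evW W J | None => set0 end.
  have : P.-negligible (\bigcup_n Fn n).
    apply: negligible_bigcup => n; rewrite /Fn; case: (unpickle n) => [J|].
      by exists (A `&` evW W J); split => //; [exact: measurableI|exact: h0].
    exact: negligible_set0.
  move=> [N [mN N0 sN]].
  have : P A <= P N.
    apply: le_measure; rewrite ?inE //.
    move=> w Aw; apply: sN; exists (pickle (W w)) => //.
    by rewrite /Fn pickleK.
  by rewrite N0 leNgt hA.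
have [uI vI] := KsetE I KI.
have [mR hR] := hRI I KI.
have mB : measurable (A `&` evW W I) by apply: measurableI.
apply: (lt_le_trans (@pos_PhiI R P I u F RI _ HP uI vI mB mR hR hI)).
apply: le_measure; rewrite ?inE //.
- exact: meas_PhiI.
- by move=> w hw; exists I.
Qed.
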